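(* Let $G=\mathrm{Cay}(\Gamma,S)$ be a Cayley graph with $D=|S|$. Then for every finite nonempty set $K\subset V$, $$\frac{|\partial_E K|}{D|K|}\geq\frac{1}{16\,\overline{R}(2|K|)},$$ with the convention $1/\infty=0$.
   Context: $S$ is a finite symmetric generating set of $\Gamma$, $V=\Gamma$, and $\partial_E K=\{\{x,y\}\in E: x\in K, y\notin K\}$ is the edge boundary. Define $\mathcal{B}(n)=\min_H|B_H(o,n)|$, where the minimum ranges over all Cayley graphs $H=\mathrm{Cay}(\Gamma',S')$ with $S'\subseteq S$ symmetric, $|S'|\ge |S|/2$, and $\Gamma'$ the subgroup of $\Gamma$ generated by $S'$; $B_H(o,n)$ is the ball of radius $n$ about the identity $o$ in $H$. Define $\overline{R}(m)=\min\{n\ge1:\mathcal{B}(n)\ge m\}$, with $\overline{R}(m)=\infty$ if $\mathcal{B}(n)<m$ for all $n\ge1$. *)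

(* Defs.v *)
(* Abstract (possibly infinite) group given by explicit
   operations on an eqType; finite subsets are duplicate-free sequences. *)
From mathcomp Require Import all_boot all_order all_algebra.
From Stdlib Require Import ClassicalEpsilon.
Set Implicit Arguments. Unset Strict Implicit. Unset Printing Implicit Defensive.
Import Order.TTheory GRing.Theory Num.Theory.

Section CayleyDefs.
Variables (T : eqType) (mul : T -> T -> T) (one : T) (inv : T -> T).

Definition is_group : Prop :=
  [/\ associative mul, left_id one mul & forall x, mul (inv x) x = one].

Definition symmetric_set (S : seq T) : bool := all (fun s => inv s \in S) S.

Definition generates (S : seq T) : Prop :=
  forall g : T, exists w : seq T, all (fun s => s \in S) w /\ g = foldr mul one w.

(* Ball of radius n about the identity in Cay(<S'>, S'), edges x ~ x s:
   the elements that are products of at most n generators from S'. *)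
Fixpoint ball (S' : seq T) (n : nat) : seq T :=
  match n with
  | 0 => [:: one]
  | n'.+1 => undup (ball S' n' ++ [seq mul x s | x <- ball S' n', s <- S'])
  end.

Definition ball_size (S' : seq T) (n : nat) : nat := size (ball S' n).

Definition admissible (S S' : seq T) : bool :=
  symmetric_set S' && (size S <= 2 * size S').

(* \mathcal B(n) = min over admissible S' subseteq S of |B_H(o,n)|;
   S itself is admissible, so its ball size is a valid neutral start. *)
Definition calB (S : seq T) (n : nat) : nat :=
  \big[minn/ball_size S n]_(m : (size S).-tuple bool | admissible S (mask m S))
     ball_size (mask m S) n.

Definition Rbar_pred (S : seq T) (m : nat) : pred nat :=
  fun n => (1 <= n) && (m <= calB S n).

(* \overline R(m) : Some n = the least n >= 1 with calB n >= m, None = infinity *)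
Definition Rbar (S : seq T) (m : nat) : option nat :=
  match excluded_middle_informative (exists n, Rbar_pred S m n) with
  | left H => Some (ex_minn H)
  | right _ => None
  end.

(* edge boundary of K, each boundary edge {x,y} recorded as (x,y) with x in K *)
Definition edge_boundary (S K : seq T) : seq (T * T) :=
  undup [seq e <- [seq (x, mul x s) | x <- K, s <- S] | e.2 \notin K].

End CayleyDefs.

Definition inv16_ext (o : option nat) : rat :=
  match o with
  | Some r => (16 * r)%:R^-1
  | None => 0
  end.

(* Main.v *)
Require Import Defs.
From mathcomp Require Import all_boot all_order all_algebra.
From mathcomp Require Import zify.
From Stdlib Require Import ClassicalEpsilon.
Import Order.TTheory GRing.Theory Num.Theory.
Set Implicit Arguments. Unset Strict Implicit.

Section G.
Variables (T : eqType) (mul : T -> T -> T) (one : T) (inv : T -> T).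
Hypothesis HG : is_group mul one inv.

Lemma gA x y z : mul x (mul y z) = mul (mul x y) z.
Proof. by case: HG => A _ _; apply: A. Qed.
Lemma g1l x : mul one x = x.
Proof. by case: HG => _ L _; apply: L. Qed.
Lemma gVl x : mul (inv x) x = one.
Proof. by case: HG => _ _ V; apply: V. Qed.
Lemma gcanl g x y : mul g x = mul g y -> x = y.
Proof. move=> E. by rewrite -(g1l x) -(g1l y) -(gVl g) -!gA E. Qed.
Lemma gVr x : mul x (inv x) = one.
Proof.
set e := mul x (inv x).
have ee : mul e e = e.
  by rewrite /e gA -(gA x (inv x) x) gVl -gA g1l.
by rewrite -(g1l e) -(gVl e) -gA ee gVl.
Qed.
Lemma g1r x : mul x one = x.
Proof. by rewrite -(gVl x) gA gVr g1l. Qed.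
Lemma gcanr g x y : mul x g = mul y g -> x = y.
Proof. move=> E. by rewrite -(g1r x) -(g1r y) -(gVr g) !gA E. Qed.
Lemma gVV x : inv (inv x) = x.
Proof. by apply: (@gcanr (inv x)); rewrite gVl gVr. Qed.
End G.

Lemma count_sum (A : Type) (a : pred A) s : count a s = \sum_(x <- s) a x.
Proof. by elim: s => [|x s IH]; rewrite ?big_nil ?big_cons //= IH. Qed.

Lemma count_allpairs (A B C : Type) (f : A -> B -> C) (p : pred C) s t :
  count p [seq f x y | x <- s, y <- t] = \sum_(x <- s) count (fun y => p (f x y)) t.
Proof.
elim: s => [|x s IH]; first by rewrite big_nil.
by rewrite allpairs_cons count_cat IH big_cons count_map.
Qed.

Lemma bigmin_le (I : eqType) (r : seq I) (P : pred I) (F : I -> nat) x0 j :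
  j \in r -> P j -> \big[minn/x0]_(i <- r | P i) F i <= F j.
Proof.
elim: r => [|i r IH] //=; rewrite inE big_cons => /orP [/eqP <-|jr] Pj.
  by rewrite Pj geq_minl.
case: (P i); last exact: IH.
by rewrite geq_min IH ?orbT.
Qed.

Section Main.
Variables (T : eqType) (mul : T -> T -> T) (one : T) (inv : T -> T).
Hypothesis HG : is_group mul one inv.
Variable K : seq T.
Hypothesis uK : uniq K.

Definition fcnt g := count (fun x => mul x g \notin K) K.

Lemma fcnt_step h s : fcnt (mul h s) <= fcnt h + fcnt s.
Proof.
rewrite /fcnt.
set q1 := (fun x => mul x h \notin K).
set q2 := (fun x => (mul x h \in K) && (mul (mul x h) s \notin K)).
apply: (@leq_trans (count (predU q1 q2) K)).
  apply: sub_count => x /= H; rewrite /q1 /q2 -(gA HG).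
  by case: (mul x h \in K) => //=; rewrite H.
have E := count_predUI q1 q2 K.
suff : count q2 K <= count (fun x => mul x s \notin K) K.
  rewrite /q1 /q2 in E *; lia.
rewrite -size_filter.
rewrite -(size_map (fun x => mul x h)) -size_filter.
apply: uniq_leq_size.
  rewrite map_inj_in_uniq ?filter_uniq //.
  by move=> x y _ _; apply: (gcanr HG).
move=> y /mapP [x]; rewrite mem_filter /q2 => /andP [/andP [H1 H2] xK] ->.
by rewrite mem_filter H2 H1.
Qed.

Lemma fcnt_one : fcnt one = 0.
Proof.
rewrite /fcnt -(count_pred0 K); apply: eq_in_count => x xK /=.
by rewrite (g1r HG) xK.
Qed.

Lemma ball_mem S' n g : g \in ball mul one S' n.+1 ->
  g \in ball mul one S' n \/ exists2 h, h \in ball mul one S' n & exists2 s, s \in S' & g = mul h s.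
Proof.
rewrite /= mem_undup mem_cat => /orP [->|]; first by left.
by case/allpairsP => [[h s] [/= hB sS ->]]; right; exists h => //; exists s.
Qed.

Lemma ball_uniq S' n : uniq (ball mul one S' n).
Proof. by case: n => [|n] //=; apply: undup_uniq. Qed.

Lemma ball_bound S' D c : (forall s, s \in S' -> D * fcnt s <= c) ->
  forall n g, g \in ball mul one S' n -> D * fcnt g <= n * c.
Proof.
move=> Hs; elim=> [|n IH] g.
  by rewrite /= inE => /eqP ->; rewrite fcnt_one muln0.
case/ball_mem => [/IH H|[h /IH hB [s /Hs sS ->]]].
  by rewrite mulSn; apply: (leq_trans H); apply: leq_addl.
apply: (leq_trans (leq_mul (leqnn D) (fcnt_step h s))); rewrite mulSn mulnDr; lia.
Qed.

Lemma avg B : uniq B -> 2 * size K <= size B -> 0 < size K ->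
  exists2 g, g \in B & size K <= 2 * fcnt g.
Proof.
move=> uB hB k0.
case: (boolP (has (fun g => size K <= 2 * fcnt g) B)).
  by case/hasP => g gB H; exists g.
rewrite -all_predC => /allP Hall.
pose A := \sum_(g <- B) count (fun x => mul x g \in K) K.
pose F := \sum_(g <- B) fcnt g.
have E : F + A = size B * size K.
  rewrite /F /A -big_split /=.
  rewrite (eq_bigr (fun _ => size K)); last first.
    by move=> g _; rewrite addnC /fcnt count_predC.
  by rewrite big_const_seq iter_addn_0 mulnC count_predT.
have HA : A <= size K * size K.
  rewrite /A.
  rewrite (eq_bigr (fun g => \sum_(x <- K) (mul x g \in K))); last by move=> g _; rewrite count_sum.
  rewrite exchange_big /=.
  rewrite -[X in _ <= X * _]count_predT count_sum big_distrl /=.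
  apply: leq_sum => x _; rewrite mul1n -count_sum -size_filter.
  rewrite -(size_map (mul x)); apply: uniq_leq_size.
    rewrite map_inj_in_uniq ?filter_uniq //.
    by move=> y z _ _; apply: (gcanl HG).
  by move=> y /mapP [g]; rewrite mem_filter => /andP [H _] ->.
have HF : 2 * F + size B <= size B * size K.
  rewrite /F big_distrr /= -[X in _ + X <= _]count_predT count_sum.
  rewrite -big_split /= -[X in _ <= X * _]count_predT count_sum big_distrl /=.
  rewrite !big_seq; apply: leq_sum => g gB; have := Hall g gB; rewrite /= -ltnNge. lia.
have := leq_mul hB (leqnn (size K)).
nia.
Qed.
End Main.

Lemma ball_nil (T : eqType) (mul : T -> T -> T) (one : T) n :
  ball mul one [::] n = [:: one].
Proof.
elim: n => [|n IH] //=; rewrite IH /=.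
by [].

Qed.

Lemma bigmin_idx (I : eqType) (r : seq I) (P : pred I) (F : I -> nat) x0 :
  \big[minn/x0]_(i <- r | P i) F i <= x0.
Proof.
elim: r => [|i r IH]; rewrite ?big_nil ?big_cons //.
case: (P i) => //; by rewrite geq_min IH orbT.
Qed.

Theorem lemma3p4 (T : eqType) (mul : T -> T -> T) (one : T) (inv : T -> T)
  (S : seq T) (K : seq T) :
  is_group mul one inv ->
  uniq S -> symmetric_set inv S -> generates mul one S -> one \notin S ->
  uniq K -> K != [::] ->
  (inv16_ext (Rbar mul one inv S (2 * size K)) <=
     (size (edge_boundary mul S K))%:R / ((size S * size K)%:R) :> rat)%R.
Proof.
move=> HG uS symS _ _ uK Kn0.
have k0 : 0 < size K by move: Kn0; case: (K).
rewrite /Rbar; case: excluded_middle_informative => [H|_]; last first.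
  by rewrite /= divr_ge0 // ler0n.
case: ex_minnP => R /andP [R1 hcal] _ /=.
set D := size S; set k := size K; set b := size (edge_boundary mul S K).
have Eb : b = \sum_(s <- S) fcnt mul K s.
  rewrite /b /edge_boundary undup_id; last first.
    rewrite filter_uniq // allpairs_uniq // => [[x s] [y t]] _ _ /= [-> E].
    by rewrite (gcanl HG E).
  rewrite size_filter count_allpairs /=.
  rewrite (eq_bigr (fun x => \sum_(s <- S) (mul x s \notin K))); last by move=> x _; rewrite count_sum.
  rewrite exchange_big /=; apply: eq_bigr => s _; by rewrite /fcnt count_sum.
pose bad s := 4 * b < D * fcnt mul K s.
have Hcb : 4 * count bad S <= D.
  have H1 : count bad S * (4 * b + 1) <= D * b.
    rewrite [in X in _ <= X]Eb big_distrr /= count_sum big_distrl /=.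
    apply: leq_sum => s _; case: (boolP (bad s)) => //=; rewrite /bad; lia.
  have Hb := leqnn b.
  case: (leqP (4 * count bad S) D) => // H2.
  have := leq_mul (ltnW H2) Hb; nia.
have Hinv : count (fun s => bad (inv s)) S = count bad S.
  have U : uniq (map inv S).
    by rewrite map_inj_uniq // => x y E; rewrite -(gVV HG x) E (gVV HG).
  have Sub : {subset map inv S <= S}.
    by move=> y /mapP [x xS ->]; move/allP: symS; apply.
  have pm : perm_eq (map inv S) S.
    apply: uniq_perm => //.
    by have [] := uniq_min_size U Sub; rewrite ?size_map.
  by rewrite -(count_map inv bad) (permP pm).
pose good2 s := ~~ bad s && ~~ bad (inv s).
pose S' := filter good2 S.
have HS' : D <= 2 * size S'.
  rewrite size_filter.
  have E := count_predC good2 S.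
  have : count (predC good2) S <= count bad S + count (fun s => bad (inv s)) S.
    rewrite -count_predUI; apply: (leq_trans _ (leq_addr _ _)).
    apply: sub_count => s /=; rewrite /good2; by case: (bad s); case: (bad (inv s)).
  rewrite Hinv -/D in E *; lia.
have symS' : symmetric_set inv S'.
  apply/allP => s; rewrite !mem_filter /good2 (gVV HG) => /andP [/andP [h1 h2] sS].
  rewrite h1 h2 /=; move/allP: symS; exact.
pose m : (size S).-tuple bool := map_tuple good2 (in_tuple S).
have Em : mask m S = S' by rewrite /S' filter_mask.
have hB : 2 * k <= size (ball mul one S' R).
  apply: (leq_trans hcal); rewrite /calB -Em.
  apply: (bigmin_le _ _ (mem_index_enum m)).
  by rewrite /admissible Em symS' /=; lia.
have uB : uniq (ball mul one S' R) by case: (R) => //= ?; apply: undup_uniq.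
have [g gB Hg] := avg HG uK uB hB k0.
have Hbd : D * fcnt mul K g <= R * (4 * b).
  apply: (ball_bound HG uK _ gB) => s.
  by rewrite mem_filter /good2 /bad => /andP [/andP [h1 _] _]; rewrite leqNgt.
have Dk : D * k <= 16 * R * b.
  have := leq_mul (leqnn D) Hg; lia.
have D0 : 0 < D.
  case: (posnP D) => // /size0nil S0.
  move: hB; rewrite /S' S0 /= ball_nil /=; lia.
rewrite ler_pdivlMr ?ltr0n ?muln_gt0 ?D0 ?k0 // mulrC ler_pdivrMr ?ltr0n ?muln_gt0 //.
rewrite -natrM ler_nat; lia.
Qed.
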